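(* Let $f:[0,\infty)\to[0,\infty)$ be a differentiable convex function with $f(0)=0$, let $0<m<M$, and let $\sigma$ be a matrix mean. Then for all $A,B\in\mathbb{P}_n^+$ with spectra contained in $[m,M]$, $$f'(0)(A\sigma B)\le \frac{f(m)}{m}(A\sigma B)\le f(A)\sigma f(B)\le \frac{f(M)}{M}(A\sigma B)\le f'(M)(A\sigma B)$$ and $$f'(0)(A\sigma B)\le \frac{f(m)}{m}(A\sigma B)\le f(A\sigma B)\le \frac{f(M)}{M}(A\sigma B)\le f'(M)(A\sigma B).$$ If $f:[0,\infty)\to[0,\infty)$ is instead a differentiable concave function with $f(0)=0$, all these inequalities are reversed.
   Context: $\mathbb{P}_n$ (resp. $\mathbb{P}_n^+$) denotes the set of $n\times n$ complex positive semidefinite (resp. positive definite) matrices, $I$ is the identity matrix and $\le$ is the Löwner order. For a Hermitian matrix $A$ and a real function $f$ defined on its spectrum, $f(A)$ is defined by functional calculus. ''Spectrum contained in $[m,M]$'' means $mI\le A\le MI$. A matrix mean is a binary operation $\sigma:\mathbb{P}_n\times\mathbb{P}_n\to\mathbb{P}_n$ such that (i) $A\le C$ and $B\le D$ imply $A\sigma B\le C\sigma D$; (ii) $C^*(A\sigma B)C\le (C^*AC)\sigma(C^*BC)$ for all $C$; (iii) if $A_k\downarrow A$ and $B_k\downarrow B$ (decreasing sequences converging) then $A_k\sigma B_k\downarrow A\sigma B$; (iv) $I\sigma I=I$. *)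

(* Defs.v *)
From HB Require Import structures.
From mathcomp Require Import all_boot all_order all_algebra.
From mathcomp Require Import sesquilinear spectral.
From mathcomp Require Import complex.
From mathcomp Require Import boolp classical_sets reals topology normedtype derive.

Set Implicit Arguments.
Unset Strict Implicit.
Unset Printing Implicit Defensive.

Import Order.TTheory GRing.Theory Num.Theory.
Import numFieldNormedType.Exports.
Local Open Scope classical_set_scope.
Local Open Scope ring_scope.

Section MatrixDefs.
Variable R : realType.
Local Notation C := R[i].

Definition ctmx n (A : 'M[C]_n) : 'M[C]_n := (map_mx Num.conj A)^T.

(* A \in P_n : Hermitian and <Ax,x> >= 0 for all x (row-vector convention:
   v A v^* with v = x^* ) *)
Definition psdmx n (A : 'M[C]_n) : Prop :=
  A \is hermsymmx /\
  forall v : 'rV[C]_n, 0 <= (v *m A *m (map_mx Num.conj v)^T) 0 0.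

Definition pdmx n (A : 'M[C]_n) : Prop :=
  A \is hermsymmx /\
  forall v : 'rV[C]_n, v != 0 -> 0 < (v *m A *m (map_mx Num.conj v)^T) 0 0.

Definition loewner n (A B : 'M[C]_n) : Prop := psdmx (B - A).

Definition spec_in n (m M : R) (A : 'M[C]_n) : Prop :=
  loewner ((m%:C)%C%:M) A /\ loewner A ((M%:C)%C%:M).

(* functional calculus: A = U^-1 diag(lambda) U (U unitary) gives
   f(A) = U^-1 diag(f(lambda)) U; for Hermitian A the eigenvalues are real *)
Definition mxfun n (f : R -> R) (A : 'M[C]_n) : 'M[C]_n :=
  invmx (spectralmx A)
  *m diag_mx (map_mx (fun z : C => ((f (complex.Re z))%:C)%C) (spectral_diag A))
  *m spectralmx A.

Definition mx_cvg n (u : nat -> 'M[C]_n) (L : 'M[C]_n) : Prop :=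
  forall i j, (complex.Re (u k i j) @[k --> \oo] --> complex.Re (L i j)) /\
              (complex.Im (u k i j) @[k --> \oo] --> complex.Im (L i j)).

Definition mx_decr_to n (u : nat -> 'M[C]_n) (L : 'M[C]_n) : Prop :=
  (forall k, loewner (u k.+1) (u k)) /\ mx_cvg u L.

Definition matrix_mean n (sigma : 'M[C]_n -> 'M[C]_n -> 'M[C]_n) : Prop :=
  (forall A B, psdmx A -> psdmx B -> psdmx (sigma A B)) /\
  (forall A B A' B', psdmx A -> psdmx B -> psdmx A' -> psdmx B' ->
     loewner A A' -> loewner B B' -> loewner (sigma A B) (sigma A' B')) /\
  (forall A B (X : 'M[C]_n), psdmx A -> psdmx B ->
     loewner (ctmx X *m sigma A B *m X)
             (sigma (ctmx X *m A *m X) (ctmx X *m B *m X))) /\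
  (forall (Ak Bk : nat -> 'M[C]_n) A B,
     (forall k, psdmx (Ak k)) -> (forall k, psdmx (Bk k)) ->
     psdmx A -> psdmx B ->
     mx_decr_to Ak A -> mx_decr_to Bk B ->
     mx_decr_to (fun k => sigma (Ak k) (Bk k)) (sigma A B)) /\
  sigma 1%:M 1%:M = 1%:M.

End MatrixDefs.

Definition convex_nonneg (R : realType) (f : R -> R) : Prop :=
  forall x y t : R, 0 <= x -> 0 <= y -> 0 <= t <= 1 ->
    f (t * x + (1 - t) * y) <= t * f x + (1 - t) * f y.

Definition concave_nonneg (R : realType) (f : R -> R) : Prop :=
  forall x y t : R, 0 <= x -> 0 <= y -> 0 <= t <= 1 ->
    t * f x + (1 - t) * f y <= f (t * x + (1 - t) * y).

(* Main.v *)
Require Import Defs.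
From HB Require Import structures.
From mathcomp Require Import all_boot all_order all_algebra.
From mathcomp Require Import sesquilinear spectral.
From mathcomp Require Import complex.
From mathcomp Require Import boolp classical_sets reals topology normedtype derive.
From mathcomp Require Import lra.
Import Order.TTheory GRing.Theory Num.Theory.
Import numFieldNormedType.Exports.
Local Open Scope classical_set_scope.
Local Open Scope ring_scope.

Section RealPart.
Variable R : realType.
Implicit Types (f : R -> R).

Lemma cvx_slope f x y : convex_nonneg f -> f 0 = 0 -> 0 < x -> x <= y ->
  f x <= x / y * f y.
Proof.
move=> cf f0 x0 xy; have y0 : 0 < y by apply: lt_le_trans xy.
have t01 : 0 <= x / y <= 1.
  by rewrite divr_ge0 ?(ltW x0) ?(ltW y0) //= ler_pdivrMr // mul1r.
have := cf y 0 (x / y) (ltW y0) (lexx 0) t01.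
by rewrite mulr0 addr0 f0 mulr0 addr0 divfK ?gt_eqF.
Qed.

Lemma ccv_slope f x y : concave_nonneg f -> f 0 = 0 -> 0 < x -> x <= y ->
  x / y * f y <= f x.
Proof.
move=> cf f0 x0 xy; have y0 : 0 < y by apply: lt_le_trans xy.
have t01 : 0 <= x / y <= 1.
  by rewrite divr_ge0 ?(ltW x0) ?(ltW y0) //= ler_pdivrMr // mul1r.
have := cf y 0 (x / y) (ltW y0) (lexx 0) t01.
by rewrite mulr0 addr0 f0 mulr0 addr0 divfK ?gt_eqF.
Qed.

Lemma cvx_ratio f x y : convex_nonneg f -> f 0 = 0 -> 0 < x -> x <= y ->
  f x / x <= f y / y.
Proof.
move=> cf f0 x0 xy; have y0 : 0 < y by apply: lt_le_trans xy.
rewrite ler_pdivrMr // [X in _ <= X]mulrC mulrA mulrAC; exact: cvx_slope.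
Qed.

Lemma ccv_ratio f x y : concave_nonneg f -> f 0 = 0 -> 0 < x -> x <= y ->
  f y / y <= f x / x.
Proof.
move=> cf f0 x0 xy; have y0 : 0 < y by apply: lt_le_trans xy.
rewrite ler_pdivlMr // [X in X <= _]mulrC mulrA mulrAC; exact: ccv_slope.
Qed.

End RealPart.

Section D.
Variable R : realType.
Implicit Types (f : R -> R).

Lemma d0_cvx f d0 m : convex_nonneg f -> f 0 = 0 -> 0 < m ->
  h^-1 * (f h - f 0) @[h --> 0^'+] --> d0 -> d0 <= f m / m.
Proof.
move=> cf f0 m0 H; rewrite -(cvg_lim _ H) //.
apply: limr_le; first by apply/cvg_ex; exists d0.
near=> h.
have h0 : 0 < h by near: h; exact: nbhs_right_gt.
have hm : h < m by near: h; exact: nbhs_right_lt.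
rewrite f0 subr0 mulrC; exact: cvx_ratio (ltW hm).
Unshelve. all: by end_near.
Qed.

Lemma d0_ccv f d0 m : concave_nonneg f -> f 0 = 0 -> 0 < m ->
  h^-1 * (f h - f 0) @[h --> 0^'+] --> d0 -> f m / m <= d0.
Proof.
move=> cf f0 m0 H; rewrite -(cvg_lim _ H) //.
apply: limr_ge; first by apply/cvg_ex; exists d0.
near=> h.
have h0 : 0 < h by near: h; exact: nbhs_right_gt.
have hm : h < m by near: h; exact: nbhs_right_lt.
rewrite f0 subr0 [h^-1 * _]mulrC; exact: ccv_ratio (ltW hm).
Unshelve. all: by end_near.
Qed.

Lemma dM_cvx f M : convex_nonneg f -> f 0 = 0 -> 0 < M -> derivable f M 1 ->
  f M / M <= derive1 f M.
Proof.
move=> cf f0 M0 dfM; rewrite derive1E.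
apply: limr_ge; first exact: dfM.
near=> h.
have hn0 : h != 0 by near: h; exact: nbhs_dnbhs_neq.
have hM : `|h| < M by near: h; exact: (nbhs_dnbhs (nbhs0_lt M0)).
change (f M / M <= h^-1 * (f (h * 1 + M) - f M)); rewrite mulr1.
set r := f M / M.
have fM : f M = r * M by rewrite /r divfK ?gt_eqF.
have := hM; rewrite ltr_norml => /andP[hM1 hM2].
case: (ltgtP h 0) hn0 => // hs _.
- rewrite ler_ndivlMl // fM.
  have : f (h + M) / (h + M) <= r by apply: cvx_ratio => //; lra.
  rewrite ler_pdivrMr; last by lra.
  nra.
- rewrite ler_pdivlMl // fM.
  have : r <= f (h + M) / (h + M) by apply: cvx_ratio => //; lra.
  rewrite ler_pdivlMr; last by lra.
  nra.
Unshelve. all: by end_near.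
Qed.

Lemma dM_ccv f M : concave_nonneg f -> f 0 = 0 -> 0 < M -> derivable f M 1 ->
  derive1 f M <= f M / M.
Proof.
move=> cf f0 M0 dfM; rewrite derive1E.
apply: limr_le; first exact: dfM.
near=> h.
have hn0 : h != 0 by near: h; exact: nbhs_dnbhs_neq.
have hM : `|h| < M by near: h; exact: (nbhs_dnbhs (nbhs0_lt M0)).
change (h^-1 * (f (h * 1 + M) - f M) <= f M / M); rewrite mulr1.
set r := f M / M.
have fM : f M = r * M by rewrite /r divfK ?gt_eqF.
have := hM; rewrite ltr_norml => /andP[hM1 hM2].
case: (ltgtP h 0) hn0 => // hs _.
- rewrite ler_ndivrMl // fM.
  have : r <= f (h + M) / (h + M) by apply: ccv_ratio => //; lra.
  rewrite ler_pdivlMr; last by lra.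
  nra.
- rewrite ler_pdivrMl // fM.
  have : f (h + M) / (h + M) <= r by apply: ccv_ratio => //; lra.
  rewrite ler_pdivrMr; last by lra.
  nra.
Unshelve. all: by end_near.
Qed.
End D.

Section Mx.
Variable R : realType.
Local Notation C := R[i].
Variable n : nat.
Implicit Types (A B X Y : 'M[C]_n) (v : 'rV[C]_n).

Definition q v A : C := (v *m A *m (map_mx Num.conj v)^T) 0 0.

Lemma ctmxE A i j : ctmx A i j = Num.conj (A j i).
Proof. by rewrite /ctmx !mxE. Qed.

Lemma herm_ctP A : A \is hermsymmx <-> ctmx A = A.
Proof.
split.
  move=> /is_hermitianmxP; rewrite expr0 scale1r => h.
  by apply/matrixP => i j; rewrite {2}h !mxE.
move=> h; apply/is_hermitianmxP; rewrite expr0 scale1r.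
by apply/matrixP => i j; rewrite -{1}h !mxE.
Qed.

Lemma ctmx_mul A B : ctmx (A *m B) = ctmx B *m ctmx A.
Proof. by rewrite /ctmx map_mxM trmx_mul. Qed.

Lemma ctmxK A : ctmx (ctmx A) = A.
Proof. by apply/matrixP => i j; rewrite !ctmxE conjCK. Qed.

Lemma ctmxD A B : ctmx (A + B) = ctmx A + ctmx B.
Proof. by apply/matrixP => i j; rewrite !mxE rmorphD. Qed.

Lemma ctmxN A : ctmx (- A) = - ctmx A.
Proof. by apply/matrixP => i j; rewrite !mxE rmorphN. Qed.

Lemma ctmxZ (a : C) A : ctmx (a *: A) = Num.conj a *: ctmx A.
Proof. by apply/matrixP => i j; rewrite !mxE rmorphM. Qed.

Lemma ctmx_scalar (a : C) : ctmx (a%:M : 'M[C]_n) = (Num.conj a)%:M.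
Proof.
apply/matrixP => i j; rewrite !mxE eq_sym.
by case: (i == j); rewrite ?mulr1n ?mulr0n ?rmorph0.
Qed.

Lemma qD v A B : q v (A + B) = q v A + q v B.
Proof. by rewrite /q mulmxDr mulmxDl mxE. Qed.

Lemma qZ v (a : C) A : q v (a *: A) = a * q v A.
Proof. by rewrite /q -scalemxAr -scalemxAl mxE. Qed.

Lemma qN v A : q v (- A) = - q v A.
Proof. by rewrite -scaleN1r qZ mulN1r. Qed.

Lemma q0 v : q v 0 = 0.
Proof. by rewrite /q mulmx0 mul0mx mxE. Qed.

Lemma q_conj v X Y : q v (ctmx X *m Y *m X) = q (v *m ctmx X) Y.
Proof.
rewrite /q map_mxM trmx_mul.
have -> : (map_mx Num.conj (ctmx X))^T = ctmx (ctmx X) by [].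
by rewrite ctmxK !mulmxA.
Qed.

Lemma q_diag v (d : 'rV[C]_n) :
  q v (diag_mx d) = \sum_i (v 0 i * Num.conj (v 0 i)) * d 0 i.
Proof.
rewrite /q mul_mx_diag !mxE; apply: eq_bigr => j _; rewrite !mxE.
by rewrite mulrAC.
Qed.

Lemma q_diag_ge0 v (d : 'rV[C]_n) : (forall i, 0 <= d 0 i) -> 0 <= q v (diag_mx d).
Proof.
move=> d0; rewrite q_diag; apply: sumr_ge0 => i _; apply: mulr_ge0 => //.
exact: mulcJ_ge0.
Qed.

Lemma q_scalar v (a : C) : q v a%:M = a * q v 1%:M.
Proof. by rewrite -qZ scalemx1. Qed.

Lemma q1_ge0 v : 0 <= q v 1%:M.
Proof.
have -> : (1%:M : 'M[C]_n) = diag_mx (const_mx 1).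
  by apply/matrixP => i j; rewrite !mxE.
by apply: q_diag_ge0 => i; rewrite mxE.
Qed.

Lemma hermD A B : A \is hermsymmx -> B \is hermsymmx -> A + B \is hermsymmx.
Proof. by move=> /herm_ctP hA /herm_ctP hB; apply/herm_ctP; rewrite ctmxD hA hB. Qed.

Lemma hermN A : A \is hermsymmx -> - A \is hermsymmx.
Proof. by move=> /herm_ctP hA; apply/herm_ctP; rewrite ctmxN hA. Qed.

Lemma hermZ (a : C) A : a \is Num.real -> A \is hermsymmx -> a *: A \is hermsymmx.
Proof.
by move=> ar /herm_ctP hA; apply/herm_ctP; rewrite ctmxZ hA conj_Creal.
Qed.

Lemma herm0 : (0 : 'M[C]_n) \is hermsymmx.
Proof. by apply/herm_ctP; apply/matrixP => i j; rewrite !mxE rmorph0. Qed.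

Lemma herm_scalar (a : C) : a \is Num.real -> (a%:M : 'M[C]_n) \is hermsymmx.
Proof. by move=> ar; apply/herm_ctP; rewrite ctmx_scalar conj_Creal. Qed.

Lemma psdD {A B} : psdmx A -> psdmx B -> psdmx (A + B).
Proof.
move=> [hA pA] [hB pB]; split; first exact: hermD.
move=> v; change (0 <= q v (A + B)); rewrite qD; exact: addr_ge0 (pA v) (pB v).
Qed.

Lemma psdZ (a : C) A : 0 <= a -> psdmx A -> psdmx (a *: A).
Proof.
move=> a0 [hA pA]; split; first by apply: hermZ => //; exact: ger0_real.
move=> v; change (0 <= q v (a *: A)); rewrite qZ; exact: mulr_ge0 a0 (pA v).
Qed.

Lemma psd0 : psdmx (0 : 'M[C]_n).
Proof. by split; [exact: herm0 | move=> v; change (0 <= q v 0); rewrite q0]. Qed.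

Lemma psd_scalar (a : C) : 0 <= a -> psdmx (a%:M : 'M[C]_n).
Proof.
move=> a0; rewrite -scalemx1; apply: psdZ => //; split.
  exact: hermitian1mx_subproof.
exact: q1_ge0.
Qed.

Lemma pd_psd A : pdmx A -> psdmx A.
Proof.
move=> [hA pA]; split => // v; have [->|vn0] := eqVneq v 0.
  by rewrite mul0mx mul0mx mxE.
exact/ltW/pA.
Qed.

Lemma loewner_trans A B X : loewner A B -> loewner B X -> loewner A X.
Proof.
rewrite /loewner => h1 h2; have := psdD h2 h1.
by rewrite addrA subrK.
Qed.

Lemma loewnerZ (a : C) A B : 0 <= a -> loewner A B -> loewner (a *: A) (a *: B).
Proof. by rewrite /loewner -scalerBr; exact: psdZ. Qed.

Lemma loewner_scal (c1 c2 : R) A : psdmx A -> c1 <= c2 ->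
  loewner ((c1%:C)%C *: A) ((c2%:C)%C *: A).
Proof.
move=> pA c12; rewrite /loewner -scalerBl -rmorphB; apply: psdZ => //.
by rewrite ler0c subr_ge0.
Qed.

Lemma loewner_psd {A B} : psdmx A -> loewner A B -> psdmx B.
Proof. by move=> pA h; have := psdD h pA; rewrite subrK. Qed.

Lemma loewner_refl A : A \is hermsymmx -> loewner A A.
Proof. by move=> _; rewrite /loewner subrr; exact: psd0. Qed.


Lemma q_delta (i : 'I_n) X : q (delta_mx 0 i) X = X i i.
Proof.
rewrite /q -rowE.
have -> : (map_mx Num.conj (delta_mx 0 i : 'rV[C]_n))^T = delta_mx i 0.
  by apply/matrixP => a b; rewrite !mxE andbC; case: (_ && _); rewrite ?rmorph1 ?rmorph0.
by rewrite -colE !mxE.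
Qed.

Lemma ctmx_diag (d : 'rV[C]_n) : (forall i, d 0 i \is Num.real) ->
  ctmx (diag_mx d) = diag_mx d.
Proof.
move=> dr; apply/matrixP => i j; rewrite !mxE eq_sym.
case: eqP => [->|_]; rewrite ?mulr1n ?mulr0n ?rmorph0 //.
exact: conj_Creal.
Qed.

Lemma psd_cdiag X (d : 'rV[C]_n) : (forall i, 0 <= d 0 i) ->
  psdmx (ctmx X *m diag_mx d *m X).
Proof.
move=> d0; split.
  apply/herm_ctP; rewrite !ctmx_mul ctmxK ctmx_diag ?mulmxA //.
  by move=> i; exact: ger0_real.
move=> v; change (0 <= q v (ctmx X *m diag_mx d *m X)); rewrite q_conj.
exact: q_diag_ge0.
Qed.

Section Spec.
Variable H : 'M[C]_n.
Hypothesis hH : H \is hermsymmx.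
Local Notation P := (spectralmx H).
Local Notation D := (spectral_diag H).

Lemma PU : P *m ctmx P = 1%:M.
Proof. by rewrite /ctmx map_trmx; apply/unitarymxP/spectral_unitarymx. Qed.

Lemma invP : invmx P = ctmx P.
Proof. by rewrite invmx_unitary ?spectral_unitarymx // /ctmx map_trmx. Qed.

Lemma UP : ctmx P *m P = 1%:M.
Proof. by rewrite -invP mulVmx // spectral_unit. Qed.

Lemma Hdec : H = ctmx P *m diag_mx D *m P.
Proof. by rewrite -invP; apply/orthomx_spectralP/hermitian_normalmx. Qed.

Lemma Dreal i : D 0 i \is Num.real.
Proof. by have /mxOverP := hermitian_spectral_diag_real hH; apply. Qed.

Lemma mxfunE g : mxfun g H =
  ctmx P *m diag_mx (map_mx (fun z : C => ((g (complex.Re z))%:C)%C) D) *m P.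
Proof. by rewrite /mxfun invP. Qed.

Lemma conj_scalar (a : C) : ctmx P *m a%:M *m P = a%:M.
Proof. by rewrite mul_mx_scalar -scalemxAl UP scalemx1. Qed.

Lemma eig_ge (m : R) : loewner ((m%:C)%C%:M) H -> forall i, m <= complex.Re (D 0 i).
Proof.
move=> [_ pH] i; have := pH (delta_mx 0 i *m P).
change (0 <= q (delta_mx 0 i *m P) (H - (m%:C)%C%:M) -> m <= complex.Re (D 0 i)).
rewrite [X in q _ (X - _)]Hdec -[X in _ - X](conj_scalar) -mulmxBl -mulmxBr q_conj -mulmxA PU mulmx1.
rewrite q_delta !mxE eqxx mulr1n subr_ge0.
by rewrite -(RRe_real (Dreal i)) lecR.
Qed.

Lemma eig_le (M : R) : loewner H ((M%:C)%C%:M) -> forall i, complex.Re (D 0 i) <= M.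
Proof.
move=> [_ pH] i; have := pH (delta_mx 0 i *m P).
change (0 <= q (delta_mx 0 i *m P) ((M%:C)%C%:M - H) -> complex.Re (D 0 i) <= M).
rewrite [X in q _ (_ - X)]Hdec -[X in X - _](conj_scalar) -mulmxBl -mulmxBr q_conj -mulmxA PU mulmx1.
rewrite q_delta !mxE eqxx mulr1n subr_ge0.
by rewrite -(RRe_real (Dreal i)) lecR.
Qed.

Lemma spec_le (m M : R) (g h : R -> R) : spec_in m M H ->
  (forall x, m <= x <= M -> g x <= h x) -> loewner (mxfun g H) (mxfun h H).
Proof.
move=> [sm sM] gh; rewrite /loewner !mxfunE -mulmxBl -mulmxBr.
have -> : diag_mx (map_mx (fun z : C => ((h (complex.Re z))%:C)%C) D) -
          diag_mx (map_mx (fun z : C => ((g (complex.Re z))%:C)%C) D) =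
          diag_mx (map_mx (fun z : C => ((h (complex.Re z) - g (complex.Re z))%:C)%C) D).
  by apply/matrixP => i j; rewrite !mxE rmorphB -mulrnBl.
apply: psd_cdiag => i; rewrite mxE ler0c subr_ge0; apply: gh.
by rewrite eig_ge // eig_le.
Qed.

Lemma mxfun_lin (c : R) : mxfun (fun x => c * x) H = (c%:C)%C *: H.
Proof.
rewrite mxfunE [in RHS]Hdec scalemxAl scalemxAr; congr (_ *m _ *m _).
apply/matrixP => i j; rewrite !mxE mulrnAr; congr (_ *+ _).
by rewrite rmorphM; congr (_ * _); exact: RRe_real (Dreal i).
Qed.

End Spec.


Section Mean.
Variable sigma : 'M[C]_n -> 'M[C]_n -> 'M[C]_n.
Hypothesis hs : matrix_mean sigma.

Lemma rc_real (s : R) : ((s%:C)%C : C) \is Num.real.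
Proof. by apply/complex_realP; exists s. Qed.

Lemma scal_conj (s : R) X :
  ctmx (((s%:C)%C)%:M : 'M[C]_n) *m X *m ((s%:C)%C)%:M = ((s * s)%:C)%C *: X.
Proof.
rewrite ctmx_scalar conj_Creal ?rc_real // mul_scalar_mx mul_mx_scalar.
by rewrite scalerA rmorphM.
Qed.

Lemma sig_psd {A B} : psdmx A -> psdmx B -> psdmx (sigma A B).
Proof. by case: hs => h _; apply: h. Qed.

Lemma sig_mono {A B A' B'} : psdmx A -> psdmx B -> psdmx A' -> psdmx B' ->
  loewner A A' -> loewner B B' -> loewner (sigma A B) (sigma A' B').
Proof. by case: hs => _ [h _]; apply: h. Qed.

Lemma sig_trans {A B} X : psdmx A -> psdmx B ->
  loewner (ctmx X *m sigma A B *m X) (sigma (ctmx X *m A *m X) (ctmx X *m B *m X)).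
Proof. by case: hs => _ [_ [h _]]; apply: h. Qed.

Lemma sig1 : sigma 1%:M 1%:M = 1%:M.
Proof. by case: hs => _ [_ [_ [_ h]]]. Qed.

Lemma homog_ge (c : R) {A B} : 0 <= c -> psdmx A -> psdmx B ->
  loewner ((c%:C)%C *: sigma A B) (sigma ((c%:C)%C *: A) ((c%:C)%C *: B)).
Proof.
move=> c0 pA pB; have := @sig_trans _ _ (((Num.sqrt c)%:C)%C%:M) pA pB.
by rewrite !scal_conj -expr2 sqr_sqrtr.
Qed.

Lemma homog_le (c : R) {A B} : 0 < c -> psdmx A -> psdmx B ->
  loewner (sigma ((c%:C)%C *: A) ((c%:C)%C *: B)) ((c%:C)%C *: sigma A B).
Proof.
move=> c0 pA pB.
have c0' : 0 <= (c%:C)%C :> C by rewrite ler0c ltW.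
have pcA : psdmx ((c%:C)%C *: A) by apply: psdZ.
have pcB : psdmx ((c%:C)%C *: B) by apply: psdZ.
have e1 : (Num.sqrt c)^-1 * (Num.sqrt c)^-1 = c^-1.
  by rewrite -invfM -expr2 sqr_sqrtr // ltW.
have e2 : forall X, ((c^-1)%:C)%C *: (((c%:C)%C : C) *: X) = X.
  move=> X; rewrite scalerA -rmorphM mulVf ?gt_eqF //.
  by rewrite (rmorph1 (complex_real_complex_def__canonical__GRing_RMorphism R)) scale1r.
have e3 : forall X, ((c%:C)%C : C) *: (((c^-1)%:C)%C *: X) = X.
  move=> X; rewrite scalerA -rmorphM mulfV ?gt_eqF //.
  by rewrite (rmorph1 (complex_real_complex_def__canonical__GRing_RMorphism R)) scale1r.
have := @sig_trans _ _ ((((Num.sqrt c)^-1)%:C)%C%:M) pcA pcB.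
rewrite !scal_conj e1 !e2 => h.
have := @loewnerZ (c%:C)%C _ _ c0' h.
by rewrite e3.
Qed.

Lemma sig00 : loewner (sigma 0 0) 0.
Proof.
have := @sig_trans _ _ (((2 : R)%:C)%C%:M) psd0 psd0.
rewrite !scal_conj !scaler0 /loewner => h.
have c3 : 0 <= ((3 : R)^-1%:C)%C :> C by rewrite ler0c invr_ge0 ler0n.
have := @psdZ ((3 : R)^-1%:C)%C _ c3 h.
have er : (3 : R)^-1 * (1 - 2 * 2) = -1.
  rewrite (_ : 1 - 2 * 2 = - 3 :> R); last by lra.
  by rewrite mulrN mulVf // pnatr_eq0.
have ec : ((3 : R)^-1%:C)%C * (1 - ((2 * 2)%:C)%C) = -1 :> C.
  have -> : (1 : C) = ((1 : R)%:C)%C by [].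
  by rewrite -rmorphB -rmorphM er rmorphN1.
set T := sigma 0 0.
have -> : ((3 : R)^-1%:C)%C *: (T - ((2 * 2)%:C)%C *: T) = 0 - T.
  by rewrite -{1}(scale1r T) -scalerBl scalerA ec scaleN1r sub0r.
by [].
Qed.


Lemma chain (f : R -> R) (m M c1 c2 : R) A B :
  0 < m -> m < M -> 0 <= c1 -> 0 <= c2 ->
  (forall x, m <= x <= M -> c1 * x <= f x /\ f x <= c2 * x) ->
  psdmx A -> psdmx B -> spec_in m M A -> spec_in m M B ->
  [/\ loewner ((c1%:C)%C *: sigma A B) (sigma (mxfun f A) (mxfun f B)),
      loewner (sigma (mxfun f A) (mxfun f B)) ((c2%:C)%C *: sigma A B),
      loewner ((c1%:C)%C *: sigma A B) (mxfun f (sigma A B)) &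
      loewner (mxfun f (sigma A B)) ((c2%:C)%C *: sigma A B)].
Proof.
move=> m0 mM c10 c20 hf pA pB sA sB.
have c10' : 0 <= (c1%:C)%C :> C by rewrite ler0c.
have c20' : 0 <= (c2%:C)%C :> C by rewrite ler0c.
have fge : forall X, psdmx X -> spec_in m M X ->
    loewner ((c1%:C)%C *: X) (mxfun f X).
  move=> X [hX _] sX; rewrite -(@mxfun_lin X hX c1).
  by apply: (@spec_le X hX m M _ _ sX) => x /hf [].
have fle : forall X, psdmx X -> spec_in m M X ->
    loewner (mxfun f X) ((c2%:C)%C *: X).
  move=> X [hX _] sX; rewrite -(@mxfun_lin X hX c2).
  by apply: (@spec_le X hX m M _ _ sX) => x /hf [].
have p1A := @psdZ _ _ c10' pA; have p1B := @psdZ _ _ c10' pB.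
have p2A := @psdZ _ _ c20' pA; have p2B := @psdZ _ _ c20' pB.
have pfA := loewner_psd p1A (fge _ pA sA).
have pfB := loewner_psd p1B (fge _ pB sB).
have pS := sig_psd pA pB.
have m0' : 0 <= (m%:C)%C :> C by rewrite ler0c ltW.
have M0' : 0 <= (M%:C)%C :> C by rewrite ler0c ltW // (lt_trans m0 mM).
have p1 : psdmx (1%:M : 'M[C]_n) := @psd_scalar 1 ler01.
have pm1 := @psdZ _ _ m0' p1; have pM1 := @psdZ _ _ M0' p1.
have sS : spec_in m M (sigma A B).
  case: sA sB => [sA1 sA2] [sB1 sB2].
  rewrite -(scalemx1 _ (m%:C)%C) in sA1 sB1.
  rewrite -(scalemx1 _ (M%:C)%C) in sA2 sB2.
  rewrite /spec_in -(scalemx1 _ (m%:C)%C) -(scalemx1 _ (M%:C)%C).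
  split.
    apply: loewner_trans (sig_mono pm1 pm1 pA pB sA1 sB1).
    by rewrite -{1}sig1; apply: homog_ge => //; rewrite ltW.
  apply: loewner_trans (sig_mono pA pB pM1 pM1 sA2 sB2) _.
  rewrite -{3}sig1; apply: homog_le => //; exact: lt_trans mM.
split.
- apply: loewner_trans (homog_ge c1 c10 pA pB) _.
  exact: sig_mono p1A p1B pfA pfB (fge _ pA sA) (fge _ pB sB).
- have [c2z|c2nz] := eqVneq c2 0.
    have := sig_mono pfA pfB p2A p2B (fle _ pA sA) (fle _ pB sB).
    rewrite c2z (rmorph0 (complex_real_complex_def__canonical__GRing_RMorphism R)).
    rewrite !scale0r => h; exact: loewner_trans h sig00.
  have c2p : 0 < c2 by rewrite lt_neqAle eq_sym c2nz c20.
  apply: loewner_trans (sig_mono pfA pfB p2A p2B (fle _ pA sA) (fle _ pB sB)) _.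
  exact: homog_le.
- exact: fge.
- exact: fle.
Qed.

End Mean.

End Mx.

Arguments pd_psd {R n A} _.
Arguments sig_psd {R n sigma} _ {A B} _ _.
Arguments chain {R n sigma} _ {f m M c1 c2 A B}.
Arguments loewner_scal {R n c1 c2 A}.
Arguments cvx_ratio {R f x y}.
Arguments ccv_ratio {R f x y}.
Arguments d0_cvx {R f d0 m}.
Arguments d0_ccv {R f d0 m}.
Arguments dM_cvx {R f M}.
Arguments dM_ccv {R f M}.

Theorem theorem2p1 (R : realType) (n : nat) (f : R -> R) (d0 m M : R)
  (sigma : 'M[R[i]]_n -> 'M[R[i]]_n -> 'M[R[i]]_n) :
  (forall x : R, 0 <= x -> 0 <= f x) ->
  f 0 = 0 ->
  (* f is differentiable on (0, +oo) ... *)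
  (forall x : R, 0 < x -> derivable f x 1) ->
  (* ... and at 0 (one-sided); d0 = f'(0) *)
  h^-1 * (f h - f 0) @[h --> 0^'+] --> d0 ->
  0 < m -> m < M ->
  matrix_mean sigma ->
  forall A B : 'M[R[i]]_n,
  pdmx A -> pdmx B -> spec_in m M A -> spec_in m M B ->
  (convex_nonneg f ->
     (loewner ((d0%:C)%C *: sigma A B) (((f m / m)%:C)%C *: sigma A B) /\
      loewner (((f m / m)%:C)%C *: sigma A B) (sigma (mxfun f A) (mxfun f B)) /\
      loewner (sigma (mxfun f A) (mxfun f B)) (((f M / M)%:C)%C *: sigma A B) /\
      loewner (((f M / M)%:C)%C *: sigma A B) (((derive1 f M)%:C)%C *: sigma A B)) /\
     (loewner ((d0%:C)%C *: sigma A B) (((f m / m)%:C)%C *: sigma A B) /\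
      loewner (((f m / m)%:C)%C *: sigma A B) (mxfun f (sigma A B)) /\
      loewner (mxfun f (sigma A B)) (((f M / M)%:C)%C *: sigma A B) /\
      loewner (((f M / M)%:C)%C *: sigma A B) (((derive1 f M)%:C)%C *: sigma A B)))
  /\
  (concave_nonneg f ->
     (loewner (((f m / m)%:C)%C *: sigma A B) ((d0%:C)%C *: sigma A B) /\
      loewner (sigma (mxfun f A) (mxfun f B)) (((f m / m)%:C)%C *: sigma A B) /\
      loewner (((f M / M)%:C)%C *: sigma A B) (sigma (mxfun f A) (mxfun f B)) /\
      loewner (((derive1 f M)%:C)%C *: sigma A B) (((f M / M)%:C)%C *: sigma A B)) /\
     (loewner (((f m / m)%:C)%C *: sigma A B) ((d0%:C)%C *: sigma A B) /\
      loewner (mxfun f (sigma A B)) (((f m / m)%:C)%C *: sigma A B) /\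
      loewner (((f M / M)%:C)%C *: sigma A B) (mxfun f (sigma A B)) /\
      loewner (((derive1 f M)%:C)%C *: sigma A B) (((f M / M)%:C)%C *: sigma A B))).
Proof.
move=> fge0 f0 df d0lim m0 mM hs A B pdA pdB sA sB.
have pA := pd_psd pdA; have pB := pd_psd pdB.
have M0 : 0 < M := lt_trans m0 mM.
have pS := sig_psd hs pA pB.
have a0 : 0 <= f m / m := divr_ge0 (fge0 _ (ltW m0)) (ltW m0).
have b0 : 0 <= f M / M := divr_ge0 (fge0 _ (ltW M0)) (ltW M0).
split => cf.
- have hf : forall x, m <= x <= M -> f m / m * x <= f x /\ f x <= f M / M * x.
    move=> x /andP[mx xM]; have x0 : 0 < x := lt_le_trans m0 mx.
    split.
      by have := cvx_ratio cf f0 m0 mx; rewrite ler_pdivlMr.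
    by have := cvx_ratio cf f0 x0 xM; rewrite ler_pdivrMr // mulrC.
  have [h1 h2 h3 h4] := chain hs m0 mM a0 b0 hf pA pB sA sB.
  have hd0 := d0_cvx cf f0 m0 d0lim.
  have hdM := dM_cvx cf f0 M0 (df _ M0).
  split; (split; first exact: (loewner_scal pS hd0)).
    by split; [exact: h1 | split; [exact: h2 | exact: (loewner_scal pS hdM)]].
  by split; [exact: h3 | split; [exact: h4 | exact: (loewner_scal pS hdM)]].
- have hf : forall x, m <= x <= M -> f M / M * x <= f x /\ f x <= f m / m * x.
    move=> x /andP[mx xM]; have x0 : 0 < x := lt_le_trans m0 mx.
    split.
      by have := ccv_ratio cf f0 x0 xM; rewrite ler_pdivlMr.
    by have := ccv_ratio cf f0 m0 mx; rewrite ler_pdivrMr.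
  have [h1 h2 h3 h4] := chain hs m0 mM b0 a0 hf pA pB sA sB.
  have hd0 := d0_ccv cf f0 m0 d0lim.
  have hdM := dM_ccv cf f0 M0 (df _ M0).
  split; (split; first exact: (loewner_scal pS hd0)).
    by split; [exact: h2 | split; [exact: h1 | exact: (loewner_scal pS hdM)]].
  by split; [exact: h4 | split; [exact: h3 | exact: (loewner_scal pS hdM)]].
Qed.
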